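(* Let $\Gamma$ be a compact and connected metric graph. (i) A vector bundle on $\Gamma$ is stable if and only if it is indecomposable. (ii) A vector bundle $E$ decomposing as $E=E_1\oplus\cdots\oplus E_r$ with all $E_i$ indecomposable is semistable if and only if $\mu(E_1)=\cdots=\mu(E_r)$.
   Context: A vector bundle of rank $n$ on a metric graph $\Gamma$ is a torsor under $S_n\ltimes\mathcal{H}_\Gamma^n$ ($\mathcal{H}_\Gamma$ = harmonic functions: piecewise linear with integer slopes and zero Laplacian). With respect to an oriented simple model and its star cover, it is given by transition matrices over $\mathbb{T}=\mathbb{R}\cup\{\infty\}$ with exactly one finite entry per row and column, finite entries affine with integer slope on the edge; isomorphism classes correspond to cohomology classes. Direct sum = block-diagonal transition matrices; degree = sum over edges of the slopes of all finite entries; slope $\mu(E)=\deg E/\mathrm{rk}E$. A rank-$m$ bundle $F$ is a subbundle of $E$ if transition matrices can be chosen with those of $E$ in block form $\begin{bmatrix} h^e&\ast\\ \infty&\ast\end{bmatrix}$, $h^e$ those of $F$. $E$ is semistable if $\mu(F)\le\mu(E)$ for all subbundles $F$, and stable if $\mu(F)<\mu(E)$ for all proper nonzero subbundles. Indecomposable means not isomorphic to a direct sum of two bundles of positive rank. *)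

(* Defs.v *)
From HB Require Import structures.
From mathcomp Require Import all_boot all_order all_algebra all_fingroup.
From mathcomp Require Import reals.
Set Implicit Arguments.
Unset Strict Implicit.
Unset Printing Implicit Defensive.
Import Order.TTheory GRing.Theory Num.Theory.
Local Open Scope ring_scope.

Section TropBundles.
Variable R : realType.

(* A point of the open edge e is
   described by its parameter t in (0, len e), the distance from src e. *)
Record model := Model {
  vert : finType;
  edge : finType;
  src : edge -> vert;
  tgt : edge -> vert;
  len : edge -> R }.
Arguments src {m} e.
Arguments tgt {m} e.
Arguments len {m} e.

Definition adjacent (G : model) : rel (vert G) := fun u v =>
  [exists e : edge G, ((src e == u) && (tgt e == v)) || ((src e == v) && (tgt e == u))].

(* Every compact connected metric graph admits such a model. *)
Definition simple_connected_model (G : model) : Prop :=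
  [/\ forall e : edge G, 0 < len e,
      forall e : edge G, src e != tgt e,
      forall e e' : edge G,
        ((src e == src e') && (tgt e == tgt e')) ||
        ((src e == tgt e') && (tgt e == src e')) -> e = e',
      forall u v : vert G, connect (@adjacent G) u v
    & (0 < #|vert G|)%N].

(* Tropical numbers T = R u {oo}, encoded as option R (None = oo),
   tropical addition = min, tropical multiplication = +.               *)
Definition tplus (x y : option R) : option R :=
  match x, y with
  | None, _ => y
  | _, None => x
  | Some a, Some b => Some (Num.min a b)
  end.
Definition ttimes (x y : option R) : option R :=
  match x, y with Some a, Some b => Some (a + b) | _, _ => None end.

Definition tmx (n : nat) := 'I_n -> 'I_n -> option R.
Definition tmul (n : nat) (A B : tmx n) : tmx n := fun i j =>
  \big[tplus/None]_(k < n) ttimes (A i k) (B k j).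
(* inverse of an (invertible = monomial) tropical matrix *)
Definition tinv (n : nat) (A : tmx n) : tmx n := fun i j => omap -%R (A j i).

(* A transition matrix on an edge: a tropical matrix with exactly one
   finite entry per row and column (row i has its finite entry in
   column tperm i), the finite entry of row i being the affine function
   t |-> toff i + tslope i * t of integer slope.                       *)
Record tmono (n : nat) := TMono {
  tperm : 'S_n;
  toff : 'I_n -> R;
  tslope : 'I_n -> int }.

Definition tentry (n : nat) (g : tmono n) (t : R) : tmx n := fun i j =>
  if tperm g i == j then Some (toff g i + (tslope g i)%:~R * t) else None.

Variable G : model.

(* transition data (a Cech 1-cochain = cocycle, the star cover of a
   simple model having no triple intersections) of a rank n bundle *)
Definition cocycle (n : nat) := edge G -> tmono n.

(* A section of S_n |x H^n over the open star U_v of v: a permutation and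
   n harmonic functions on U_v.  A harmonic function on U_v (piecewise
   linear, integer slopes, zero Laplacian) is affine on every incident
   open edge and continuous at v; it is given by its value at v and its
   outgoing integer slope along each incident edge, these slopes summing
   to zero (zero Laplacian at v).                                       *)
Record hsec (n : nat) := HSec {
  hperm : 'S_n;
  hval : 'I_n -> R;
  hslope : 'I_n -> edge G -> int }.

Definition harmonic_sec (n : nat) (v : vert G) (phi : hsec n) : Prop :=
  forall i, \sum_(e : edge G | (src e == v) || (tgt e == v)) hslope phi i e = 0.

Definition hrestr (n : nat) (v : vert G) (phi : hsec n) (e : edge G) (i : 'I_n)
  (t : R) : R :=
  if src e == v then hval phi i + (hslope phi i e)%:~R * t
  else hval phi i + (hslope phi i e)%:~R * (len e - t).

Definition hentry (n : nat) (v : vert G) (phi : hsec n) (e : edge G) (t : R)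
  : tmx n := fun i j =>
  if hperm phi i == j then Some (hrestr v phi e i t) else None.

Definition cohomologous (n : nat) (g g' : cocycle n) : Prop :=
  exists phi : vert G -> hsec n,
    (forall v, harmonic_sec v (phi v)) /\
    forall (e : edge G) (t : R), 0 < t < len e ->
      tentry (g' e) t =
      tmul (tmul (hentry (src e) (phi (src e)) e t) (tentry (g e) t))
           (tinv (hentry (tgt e) (phi (tgt e)) e t)).

Definition bundle := {n : nat & cocycle n}.
Definition rk (E : bundle) : nat := tag E.
Definition deg (E : bundle) : int :=
  \sum_(e : edge G) \sum_(i < rk E) tslope (tagged E e) i.
Definition slope (E : bundle) : rat := (deg E)%:~R / (rk E)%:R.

Definition castc (m n : nat) (H : m = n) (g : cocycle m) : cocycle n :=
  eq_rect m cocycle g n H.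

Definition iso (E F : bundle) : Prop :=
  exists H : rk E = rk F, cohomologous (castc H (tagged E)) (tagged F).

Definition psum_fun (m k : nat) (s : 'S_m) (s' : 'S_k) (i : 'I_(m + k))
  : 'I_(m + k) :=
  unsplit (match split i with inl j => inl (s j) | inr j => inr (s' j) end).

Lemma psum_inj (m k : nat) (s : 'S_m) (s' : 'S_k) : injective (psum_fun s s').
Proof.
move=> i j; rewrite /psum_fun => /(can_inj unsplitK).
case: (split i) (splitK i) => a <-; case: (split j) (splitK j) => b <- //=.
- by move=> [/perm_inj ->].
- by move=> [/perm_inj ->].
Qed.

Definition psum (m k : nat) (s : 'S_m) (s' : 'S_k) : 'S_(m + k) :=
  perm (@psum_inj m k s s').

Definition tsum (m k : nat) (g : tmono m) (h : tmono k) : tmono (m + k) :=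
  TMono (psum (tperm g) (tperm h))
    (fun i => match split i with inl j => toff g j | inr j => toff h j end)
    (fun i => match split i with inl j => tslope g j | inr j => tslope h j end).

Definition dsum (E F : bundle) : bundle :=
  existT _ (rk E + rk F)%N (fun e => tsum (tagged E e) (tagged F e)).

Definition zero_bundle : bundle :=
  existT _ 0%N (fun _ => TMono (1 : 'S_0) (fun _ => 0) (fun _ => 0)).

Fixpoint dsum_fam (r : nat) : ('I_r -> bundle) -> bundle :=
  match r with
  | 0 => fun _ => zero_bundle
  | r'.+1 => fun Es => dsum (Es ord0) (dsum_fam (fun i : 'I_r' => Es (lift ord0 i)))
  end.

(* F (rank m) is a subbundle of E (rank n): transition matrices can be
   chosen with those of E of block form [[h, *], [oo, *]], with h those
   of F (upper-left m x m block = h, lower-left (n-m) x m block = oo). *)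
Definition subbundle (F E : bundle) : Prop :=
  exists (Hmn : (rk F <= rk E)%N) (g' : cocycle (rk E)) (h : cocycle (rk F)),
    [/\ cohomologous (tagged E) g', cohomologous (tagged F) h &
      forall (e : edge G) (t : R), 0 < t < len e ->
        (forall i j : 'I_(rk F),
            tentry (g' e) t (widen_ord Hmn i) (widen_ord Hmn j) = tentry (h e) t i j) /\
        (forall (i : 'I_(rk E)) (j : 'I_(rk F)), (rk F <= i)%N ->
            tentry (g' e) t i (widen_ord Hmn j) = None)].

Definition semistable (E : bundle) : Prop :=
  forall F : bundle, (0 < rk F)%N -> subbundle F E -> slope F <= slope E.

Definition stable (E : bundle) : Prop :=
  forall F : bundle, (0 < rk F < rk E)%N -> subbundle F E -> slope F < slope E.

Definition indecomposable (E : bundle) : Prop :=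
  ~ exists E1 E2 : bundle, [/\ (0 < rk E1)%N, (0 < rk E2)%N & iso E (dsum E1 E2)].

End TropBundles.

Lemma tsum_block (R : realType) (m k : nat) (g : tmono R m) (h : tmono R k) t :
  (forall i j, tentry (tsum g h) t (lshift k i) (lshift k j) = tentry g t i j) /\
  (forall i j, tentry (tsum g h) t (rshift m i) (rshift m j) = tentry h t i j) /\
  (forall i j, tentry (tsum g h) t (lshift k i) (rshift m j) = None) /\
  (forall i j, tentry (tsum g h) t (rshift m i) (lshift k j) = None).
Proof.
rewrite /tentry /= /psum; split; [|split; [|split]] => i j; rewrite permE /psum_fun.
- by rewrite /= ?(unsplitK (inl _)) /= (inj_eq (@lshift_inj _ _)).
- by rewrite ?(unsplitK (inr _)) /= (inj_eq (@rshift_inj _ _)).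
- rewrite (unsplitK (inl _)) /=; case: eqP => // /(congr1 val) /= H.
  by have := ltn_ord (tperm g i); rewrite H ltnNge leq_addr.
- rewrite (unsplitK (inr _)) /=; case: eqP => // /(congr1 val) /= H.
  by have := ltn_ord j; rewrite -H ltnNge leq_addr.
Qed.

(* Main.v *)
Require Import Defs.
From HB Require Import structures.
From mathcomp Require Import all_boot all_order all_algebra all_fingroup.
From mathcomp Require Import reals.
From mathcomp Require Import ring lra zify.
From Stdlib Require Import Lia.
From Stdlib Require Import FunctionalExtensionality.
Import Defs.
Set Implicit Arguments.
Unset Strict Implicit.
Unset Printing Implicit Defensive.
Import Order.TTheory GRing.Theory Num.Theory.
Local Open Scope ring_scope.

Section Proofs.
Variable R : realType.

Lemma big_tplus_seq (I : eqType) (s : seq I) (F : I -> option R) k0 :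
  (forall k, k != k0 -> F k = None) ->
  \big[@tplus R/None]_(k <- s) F k = if k0 \in s then F k0 else None.
Proof.
move=> HF; elim: s => [|a s IH]; first by rewrite big_nil.
rewrite big_cons IH in_cons; case: (eqVneq a k0) => [->|ne] /=.
  by case: (k0 \in s); case: (F k0) => //= x; rewrite minxx.
by rewrite HF //; case: (k0 \in s).
Qed.

Lemma big_tplus_one n (F : 'I_n -> option R) k0 :
  (forall k, k != k0 -> F k = None) ->
  \big[@tplus R/None]_(k < n) F k = F k0.
Proof. by move=> HF; rewrite (big_tplus_seq _ HF) mem_index_enum. Qed.

Variable G : model R.

Definition tval n (g : tmono R n) i (t : R) := toff g i + (tslope g i)%:~R * t.

Lemma rhs_eq n (phi psi : hsec G n) (g : tmono R n) v w e t i j :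
  tmul (tmul (hentry v phi e t) (tentry g t)) (tinv (hentry w psi e t)) i j =
  if hperm psi j == tperm g (hperm phi i) then
    Some (hrestr v phi e i t + tval g (hperm phi i) t - hrestr w psi e j t)
  else None.
Proof.
rewrite /tmul (big_tplus_one (k0:=tperm g (hperm phi i))); last first.
  move=> k nk; rewrite (big_tplus_one (k0:=hperm phi i)).
    rewrite /hentry /tentry eqxx; case: eqP => // Ek; by rewrite Ek eqxx in nk.
  by move=> l nl; rewrite /hentry; case: eqP => // El; rewrite El eqxx in nl.
rewrite (big_tplus_one (k0:=hperm phi i)); last first.
  by move=> l nl; rewrite /hentry; case: eqP => // El; rewrite El eqxx in nl.
rewrite /hentry /tentry /tinv !eqxx /=.
case: eqP => //= _; by rewrite /tval.
Qed.


Hypothesis Hlen : forall e : edge G, 0 < len e.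
Hypothesis Hloop : forall e : edge G, src e != tgt e.

Definition gauge n (phi : vert G -> hsec G n) (g g' : cocycle G n) :=
 forall e : edge G,
  (forall i, hperm (phi (tgt e)) (tperm (g' e) i) = tperm (g e) (hperm (phi (src e)) i)) /\
  (forall t, 0 < t < len e -> forall i, tval (g' e) i t =
     hrestr (src e) (phi (src e)) e i t + tval (g e) (hperm (phi (src e)) i) t
     - hrestr (tgt e) (phi (tgt e)) e (tperm (g' e) i) t).

Lemma half_in (e : edge G) : 0 < len e / 2 < len e.
Proof. have := Hlen e => ?; apply/andP; split; lra. Qed.

Lemma cohomP n (g g' : cocycle G n) :
 cohomologous g g' <-> exists phi, (forall v, harmonic_sec v (phi v)) /\ gauge phi g g'.
Proof.
split.
  move=> [phi [Hh Heq]]; exists phi; split => // e; split.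
    move=> i; have := congr1 (fun M => M i (tperm (g' e) i)) (Heq e _ (half_in e)).
    by rewrite rhs_eq /tentry eqxx /=; case: eqP.
  move=> t Ht i; have := congr1 (fun M => M i (tperm (g' e) i)) (Heq e t Ht).
  by rewrite rhs_eq /tentry eqxx /= /tval; case: eqP => // _ [->].
move=> [phi [Hh Hg]]; exists phi; split => // e t Ht.
apply: functional_extensionality => i; apply: functional_extensionality => j.
have [Hp Hv] := Hg e.
rewrite rhs_eq /tentry; case: (eqVneq (tperm (g' e) i) j) => [<-|ne].
  by rewrite Hp eqxx -Hv.
case: eqP => // E; rewrite -Hp in E; move/perm_inj: E => E.
by rewrite E eqxx in ne.
Qed.

Lemma affine_slope (a b c d L : R) : 0 < L ->
  (forall t, 0 < t < L -> a + b * t = c + d * t) -> b = d.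
Proof.
move=> L0 H.
have E1 := H (L / 2) ltac:(apply/andP; split; lra).
have E2 := H (L / 4) ltac:(apply/andP; split; lra).
have : (b - d) * (L / 4) = 0.
  have -> : (b - d) * (L / 4) = ((a + b * (L/2)) - (a + b*(L/4))) - ((c + d*(L/2)) - (c + d * (L/4))) by field.
  by rewrite E1 E2; ring.
move/eqP; rewrite mulf_eq0 => /orP [/eqP|/eqP]; first by move/eqP; rewrite subr_eq0 => /eqP.
move=> ?; lra.
Qed.

Lemma slope_gauge n phi (g g' : cocycle G n) : gauge phi g g' -> forall e i,
  tslope (g' e) i = hslope (phi (src e)) i e + tslope (g e) (hperm (phi (src e)) i)
     + hslope (phi (tgt e)) (tperm (g' e) i) e.
Proof.
move=> Hg e i; have [_ Hv] := Hg e.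
apply: (@intr_inj R); rewrite !rmorphD /=.
apply: (@affine_slope (toff (g' e) i)
  _ (hval (phi (src e)) i + toff (g e) (hperm (phi (src e)) i)
      - hval (phi (tgt e)) (tperm (g' e) i) - (hslope (phi (tgt e)) (tperm (g' e) i) e)%:~R * len e)
  _ (len e) (Hlen e)) => t Ht.
have := Hv t Ht i; rewrite /tval /hrestr eqxx (negbTE (Hloop e)) => ->.
ring.
Qed.


Definition closed n (g : cocycle G n) (S : vert G -> {set 'I_n}) :=
  forall e i, (i \in S (src e)) = (tperm (g e) i \in S (tgt e)).
Definition degS n (g : cocycle G n) (S : vert G -> {set 'I_n}) : int :=
  \sum_(e : edge G) \sum_(i in S (src e)) tslope (g e) i.
Definition tr n (phi : vert G -> hsec G n) (S : vert G -> {set 'I_n}) v :=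
  [set k | (hperm (phi v))^-1%g k \in S v].

Lemma in_tr n (phi : vert G -> hsec G n) S v i :
  (hperm (phi v) i \in tr phi S v) = (i \in S v).
Proof. by rewrite inE permK. Qed.

Lemma closed_tr n phi (g g' : cocycle G n) S :
  gauge phi g g' -> closed g' S <-> closed g (tr phi S).
Proof.
move=> Hg; split => Hc e.
  move=> k; have -> : k = hperm (phi (src e)) ((hperm (phi (src e)))^-1%g k) by rewrite permKV.
  by rewrite in_tr -(proj1 (Hg e)) in_tr Hc.
by move=> i; rewrite -(in_tr phi S (src e)) Hc -(proj1 (Hg e)) in_tr.
Qed.

Lemma tr_imset n (phi : vert G -> hsec G n) S v :
  tr phi S v = hperm (phi v) @: S v.
Proof.
apply/setP => k; rewrite inE; apply/idP/imsetP.
  by move=> H; exists ((hperm (phi v))^-1%g k) => //; rewrite permKV.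
by move=> [x Hx ->]; rewrite permK.
Qed.

Lemma card_tr n (phi : vert G -> hsec G n) S v : #|tr phi S v| = #|S v|.
Proof. by rewrite tr_imset card_imset //; apply: perm_inj. Qed.

Lemma incident_sum (f : vert G -> edge G -> int) e :
  \sum_(v | (src e == v) || (tgt e == v)) f v e = f (src e) e + f (tgt e) e.
Proof.
rewrite (bigD1 (src e)) ?eqxx //= (bigD1 (tgt e)) /=; last first.
  by rewrite eqxx orbT andTb eq_sym; exact: Hloop.
rewrite big1 ?addr0 // => v; rewrite -!andbA => /and3P [H1 H2 H3].
by case/orP: H1 => /eqP Ev; [rewrite -Ev eqxx in H2 | rewrite -Ev eqxx in H3].
Qed.

Lemma deg_tr n phi (g g' : cocycle G n) S :
  (forall v, harmonic_sec v (phi v)) -> gauge phi g g' -> closed g' S ->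
  degS g' S = degS g (tr phi S).
Proof.
move=> Hh Hg Hc; rewrite /degS.
have E1 : forall e, \sum_(i in S (src e)) tslope (g e) (hperm (phi (src e)) i)
   = \sum_(k in tr phi S (src e)) tslope (g e) k.
  move=> e; rewrite [RHS](reindex_inj (h := hperm (phi (src e)))); last exact: perm_inj.
  by apply: eq_bigl => i; rewrite in_tr.
have E2 : forall e, \sum_(i in S (src e)) hslope (phi (tgt e)) (tperm (g' e) i) e
   = \sum_(j in S (tgt e)) hslope (phi (tgt e)) j e.
  move=> e; rewrite [RHS](reindex_inj (h := tperm (g' e))); last exact: perm_inj.
  by apply: eq_bigl => i; rewrite Hc.
pose f v e := \sum_(i in S v) hslope (phi v) i e.
have Z : \sum_(e : edge G) (f (src e) e + f (tgt e) e) = 0.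
  under eq_bigr => e _ do rewrite -incident_sum.
  rewrite (eq_bigr (fun e => \sum_v (if (src e == v) || (tgt e == v) then f v e else 0)));
    last by move=> e _; rewrite big_mkcond.
  rewrite exchange_big /=; apply: big1 => v _.
  rewrite -big_mkcond /= /f exchange_big /=; apply: big1 => i _.
  exact: Hh.
have -> : \sum_(e : edge G) \sum_(i in S (src e)) tslope (g' e) i =
  \sum_(e : edge G) \sum_(i in S (src e)) tslope (g e) (hperm (phi (src e)) i) +
  \sum_(e : edge G) (f (src e) e + f (tgt e) e).
  rewrite -big_split /=; apply: eq_bigr => e _.
  rewrite /f -E2 -!big_split /=; apply: eq_bigr => i _.
  by rewrite (slope_gauge Hg); ring.
by rewrite Z addr0; apply: eq_bigr => e _; rewrite E1.
Qed.


Definition full n : vert G -> {set 'I_n} := fun _ => setT.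
Definition low n m : vert G -> {set 'I_n} := fun _ => [set i : 'I_n | (i < m)%N].

Lemma degS_full n (g : cocycle G n) : degS g (full n) = deg (existT _ n g).
Proof. by rewrite /degS /deg; apply: eq_bigr => e _; apply: eq_bigl => i; rewrite inE. Qed.

Lemma closed_full n (g : cocycle G n) : closed g (full n).
Proof. by move=> e i; rewrite !inE. Qed.

Lemma tr_full n (phi : vert G -> hsec G n) : tr phi (full n) = full n.
Proof. by apply: functional_extensionality => v; apply/setP => k; rewrite !inE. Qed.

Lemma cohom_deg n (g g' : cocycle G n) :
  cohomologous g g' -> deg (existT _ n g) = deg (existT _ n g').
Proof.
move/cohomP => [phi [Hh Hg]].
by rewrite -!degS_full (deg_tr Hh Hg (closed_full _)) tr_full.
Qed.

Lemma cohom_ext n (g g1 g2 : cocycle G n) : cohomologous g g1 ->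
  (forall e t, tentry (g1 e) t = tentry (g2 e) t) -> cohomologous g g2.
Proof. by move=> [phi [Hh H]] Ht; exists phi; split => // e t Htt; rewrite -Ht; exact: H. Qed.

Hypothesis Hconn : forall u v : vert G, connect (@adjacent R G) u v.

Lemma closed_card n (g : cocycle G n) S : closed g S -> forall u v, #|S u| = #|S v|.
Proof.
move=> Hc.
have He : forall e, #|S (tgt e)| = #|S (src e)|.
  move=> e; have -> : S (tgt e) = tperm (g e) @: S (src e).
    apply/setP => k; apply/idP/imsetP.
      move=> Hk; exists ((tperm (g e))^-1%g k); last by rewrite permKV.
      by rewrite Hc permKV.
    by move=> [x Hx ->]; rewrite -Hc.
  by rewrite card_imset //; apply: perm_inj.
have Ha : forall u v, adjacent u v -> #|S u| = #|S v|.
  move=> u v /existsP [e /orP [/andP [/eqP <- /eqP <-] | /andP [/eqP <- /eqP <-]]].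
    by rewrite He.
  by rewrite He.
move=> u v; move: (Hconn u v) => /connectP [p Hp ->].
elim: p u Hp => [|w p IH] u //= /andP [Hu Hp].
by rewrite (Ha _ _ Hu) IH.
Qed.

Lemma perm_of_set n (A : {set 'I_n}) m : #|A| = m ->
  exists p : 'S_n, forall i, (p i \in A) = (i < m)%N.
Proof.
move=> HA.
pose s := enum A ++ enum (~: A).
have Hs : size s = n by rewrite size_cat -!cardE cardsC card_ord.
have Hu : uniq s.
  rewrite cat_uniq !enum_uniq andbT /=; apply/hasPn => x; rewrite !mem_enum inE.
  by move=> /negbTE ->.
pose f (i : 'I_n) := nth i s i.
have finj : injective f.
  move=> i j; rewrite /f [nth j s j](set_nth_default i); last by rewrite Hs.
  move/eqP; rewrite nth_uniq ?Hs // => /eqP; apply: ord_inj.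
exists (perm finj) => i; rewrite permE /f nth_cat -cardE HA.
case: ifP => Him.
  by rewrite -mem_enum mem_nth // -cardE HA.
have : nth i (enum (~: A)) (i - m) \in enum (~: A).
  apply: mem_nth; rewrite -cardE.
  have := cardsC A; rewrite card_ord HA => Hn.
  have := ltn_ord i; move: Him; lia.
by rewrite mem_enum inE => /negbTE.
Qed.

Definition pgauge n (pi : vert G -> 'S_n) : vert G -> hsec G n :=
  fun v => HSec (pi v) (fun _ => 0) (fun _ _ => 0).
Definition pgc n (pi : vert G -> 'S_n) (g : cocycle G n) : cocycle G n := fun e =>
  TMono (pi (src e) * tperm (g e) * (pi (tgt e))^-1)%g
     (fun i => toff (g e) (pi (src e) i)) (fun i => tslope (g e) (pi (src e) i)).

Lemma pgc_gauge n (pi : vert G -> 'S_n) g : gauge (pgauge pi) g (pgc pi g).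
Proof.
move=> e; split => [i|t Ht i] /=; first by rewrite !permM permKV.
rewrite /hrestr /tval /=; case: ifP => _; case: ifP => _; rewrite ?mulr0z; ring.
Qed.

Lemma pgc_cohom n (pi : vert G -> 'S_n) g : cohomologous g (pgc pi g).
Proof.
apply/cohomP; exists (pgauge pi); split; last exact: pgc_gauge.
by move=> v i; rewrite /harmonic_sec big1.
Qed.

Lemma cohom_refl n (g : cocycle G n) : cohomologous g g.
Proof.
apply: (cohom_ext (pgc_cohom (fun _ => 1%g) g)) => e t.
apply: functional_extensionality => i; apply: functional_extensionality => j.
by rewrite /tentry /= invg1 mulg1 mul1g !perm1.
Qed.

Lemma L2 n (g : cocycle G n) T m : closed g T -> (forall v, #|T v| = m) ->
  exists g', [/\ cohomologous g g', closed g' (low n m) & degS g' (low n m) = degS g T].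
Proof.
move=> Hc HT.
have [pi Hpi] := fin_all_exists (fun v => perm_of_set (HT v)).
have Etr : tr (pgauge pi) (low n m) = T.
  apply: functional_extensionality => v; apply/setP => k.
  by rewrite !inE /= -(Hpi v) permKV.
have Hg := pgc_gauge pi g.
have Hcl : closed (pgc pi g) (low n m) by apply/(closed_tr _ Hg); rewrite Etr.
exists (pgc pi g); split => //; first exact: pgc_cohom.
rewrite (deg_tr _ Hg Hcl) ?Etr // => v i; by rewrite /harmonic_sec big1.
Qed.


Lemma card_low n m (v : vert G) : (m <= n)%N -> #|low n m v| = m.
Proof.
move=> Hmn; rewrite /low -sum1_card big_set /= (big_ord_narrow Hmn) sum1_card card_ord.
by [].
Qed.

Lemma upblk n m (Hmn : (m <= n)%N) (g : cocycle G n) : closed g (low n m) ->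
  exists g1 : cocycle G m, forall e i,
   [/\ val (tperm (g1 e) i) = val (tperm (g e) (widen_ord Hmn i)),
       toff (g1 e) i = toff (g e) (widen_ord Hmn i) &
       tslope (g1 e) i = tslope (g e) (widen_ord Hmn i)].
Proof.
move=> Hc.
have Hlt : forall e (i : 'I_m), (val (tperm (g e) (widen_ord Hmn i)) < m)%N.
  move=> e i; have := Hc e (widen_ord Hmn i); rewrite !inE /= ltn_ord.
  by move=> /esym.
pose f e (i : 'I_m) := insubd i (val (tperm (g e) (widen_ord Hmn i))) : 'I_m.
have Hf : forall e i, val (f e i) = val (tperm (g e) (widen_ord Hmn i)).
  by move=> e i; rewrite /f insubdK //; exact: Hlt.
have finj : forall e, injective (f e).
  move=> e i j /(congr1 val); rewrite !Hf => /val_inj /perm_inj /(congr1 val) /= H.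
  exact: val_inj.
exists (fun e => TMono (perm (finj e)) (fun i => toff (g e) (widen_ord Hmn i))
                  (fun i => tslope (g e) (widen_ord Hmn i))).
by move=> e i; split => //=; rewrite permE Hf.
Qed.

Lemma lowblk m k (g : cocycle G (m + k)) : closed g (low (m + k) m) ->
  exists g2 : cocycle G k, forall e j,
   [/\ nat_of_ord (tperm (g2 e) j) + m = nat_of_ord (tperm (g e) (rshift m j)),
       toff (g2 e) j = toff (g e) (rshift m j) &
       tslope (g2 e) j = tslope (g e) (rshift m j)]%N.
Proof.
move=> Hc.
have Hge : forall e (j : 'I_k), (m <= nat_of_ord (tperm (g e) (rshift m j)))%N.
  move=> e j; have := Hc e (rshift m j); rewrite !inE /=.
  rewrite ltnNge leq_addr /= => /esym /negbT; rewrite -leqNgt; done.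
have Hlt : forall e (j : 'I_k), (nat_of_ord (tperm (g e) (rshift m j)) - m < k)%N.
  move=> e j; have := Hge e j; have := ltn_ord (tperm (g e) (rshift m j)).
  lia.
pose f e (j : 'I_k) := insubd j (nat_of_ord (tperm (g e) (rshift m j)) - m)%N : 'I_k.
have Hf : forall e j, val (f e j) = (nat_of_ord (tperm (g e) (rshift m j)) - m)%N.
  by move=> e j; rewrite /f insubdK //; exact: Hlt.
have finj : forall e, injective (f e).
  move=> e i j /(congr1 val); rewrite !Hf => H.
  have : nat_of_ord (tperm (g e) (rshift m i)) = nat_of_ord (tperm (g e) (rshift m j)).
    by have := Hge e i; have := Hge e j; lia.
  move=> /val_inj /perm_inj /(congr1 val) /= H2; apply: val_inj; move: H2; rewrite /=; lia.
exists (fun e => TMono (perm (finj e)) (fun i => toff (g e) (rshift m i))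
                  (fun i => tslope (g e) (rshift m i))).
move=> e j; split => //=; rewrite permE Hf; have := Hge e j; lia.
Qed.

Lemma slope_of_entries n1 n2 (g1 : tmono R n1) (g2 : tmono R n2) (e : edge G) i1 i2 j1 j2 :
  (forall t, 0 < t < len e -> tentry g1 t i1 j1 = tentry g2 t i2 j2) ->
  tperm g2 i2 = j2 -> tslope g1 i1 = tslope g2 i2.
Proof.
move=> H Hp; apply: (@intr_inj R).
apply: (@affine_slope (toff g1 i1) _ (toff g2 i2) _ (len e) (Hlen e)) => t Ht.
have := H t Ht; rewrite /tentry Hp eqxx; case: eqP => // _ [] //.
Qed.

Lemma sub_closed (F E : bundle G) : subbundle F E ->
  exists T, [/\ closed (tagged E) T, forall v, #|T v| = rk F & degS (tagged E) T = deg F].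
Proof.
case: F => m gF; case: E => n gE /= [Hmn [g' [h [HE HF Hb]]]] /=.
have Hcl : closed g' (low n m).
  move=> e i; rewrite !inE; have [Hul Hll] := Hb e _ (half_in e).
  case: (ltnP i m) => Him.
    pose i' := Ordinal Him.
    have Ew : widen_ord Hmn i' = i by apply: val_inj.
    have := Hul i' (tperm (h e) i'); rewrite Ew /tentry eqxx.
    by case: eqP => // -> _ /=; rewrite ltn_ord.
  case: (ltnP (tperm (g' e) i) m) => // Hs.
  pose j := Ordinal Hs.
  have := Hll i j Him; rewrite /tentry.
  have -> : widen_ord Hmn j = tperm (g' e) i by apply: val_inj.
  by rewrite eqxx.
have [phi [Hh Hg]] := (cohomP _ _).1 HE.
exists (tr phi (low n m)); split.
- exact/(closed_tr _ Hg).
- by move=> v; rewrite card_tr card_low.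
rewrite -(deg_tr Hh Hg Hcl) (cohom_deg HF) /degS /deg /=.
apply: eq_bigr => e _; rewrite /low big_set /= (big_ord_narrow Hmn).
apply: eq_bigr => i _; apply: (@slope_of_entries _ _ _ _ e _ _ (widen_ord Hmn (tperm (h e) i)) (tperm (h e) i)) => //.
by move=> t Ht; have [Hul _] := Hb e t Ht; apply: Hul.
Qed.

Lemma closed_sub (E : bundle G) T m : closed (tagged E) T -> (forall v, #|T v| = m) ->
  (m <= rk E)%N -> exists F, [/\ subbundle F E, rk F = m & deg F = degS (tagged E) T].
Proof.
case: E T => n gE T /= Hc HT Hmn.
have [g' [HE Hcl Hdeg]] := L2 Hc HT.
have [g1 Hg1] := upblk Hmn Hcl.
exists (existT _ m g1); split => //.
  exists Hmn, g', g1; split => //; first exact: cohom_refl.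
  move=> e t Ht; split.
    move=> i j; rewrite /tentry /=; have [Hp Ho Hs] := Hg1 e i.
    have -> : (tperm (g' e) (widen_ord Hmn i) == widen_ord Hmn j) = (tperm (g1 e) i == j).
      by rewrite -!val_eqE /= Hp.
    by rewrite /= Ho Hs.
  move=> i j Hi; rewrite /tentry /=; case: eqP => // Ei.
  by have := Hcl e i; rewrite !inE Ei /= ltn_ord ltnNge Hi.
rewrite -Hdeg /degS /deg /=; apply: eq_bigr => e _.
rewrite /low big_set /= (big_ord_narrow Hmn); apply: eq_bigr => i _.
by have [_ _ ->] := Hg1 e i.
Qed.


Lemma split_l m k (a : 'I_m) : split (lshift k a) = inl a.
Proof. exact: (unsplitK (inl a)). Qed.
Lemma split_r m k (b : 'I_k) : split (rshift m b) = inr b.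
Proof. exact: (unsplitK (inr b)). Qed.

Lemma ord_split_ind a b (P : 'I_(a + b) -> Prop) :
  (forall x, P (lshift b x)) -> (forall y, P (rshift a y)) -> forall i, P i.
Proof. by move=> Hl Hr i; rewrite -(splitK i); case: (split i) => [x|y]; [exact: Hl|exact: Hr]. Qed.

Lemma tsum_l n1 n2 (g : tmono R n1) (h : tmono R n2) x :
  [/\ tperm (tsum g h) (lshift n2 x) = lshift n2 (tperm g x),
      toff (tsum g h) (lshift n2 x) = toff g x &
      tslope (tsum g h) (lshift n2 x) = tslope g x].
Proof. by split; rewrite /= ?permE /psum_fun split_l. Qed.

Lemma tsum_r n1 n2 (g : tmono R n1) (h : tmono R n2) y :
  [/\ tperm (tsum g h) (rshift n1 y) = rshift n1 (tperm h y),
      toff (tsum g h) (rshift n1 y) = toff h y &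
      tslope (tsum g h) (rshift n1 y) = tslope h y].
Proof. by split; rewrite /= ?permE /psum_fun split_r. Qed.

Lemma tagged_dsum (A B : bundle G) e : tagged (dsum A B) e = tsum (tagged A e) (tagged B e).
Proof. by []. Qed.

Lemma decomp (E : bundle G) T m : closed (tagged E) T -> (forall v, #|T v| = m) ->
  (0 < m < rk E)%N -> ~ indecomposable E.
Proof.
case: E T => n gE T /= Hc HT Hm Hind.
have [g' [HE Hcl _]] := L2 Hc HT.
have [k Hn] : exists k, n = (m + k)%N by exists (n - m)%N; lia.
subst n.
have [g1 H1] := upblk (leq_addr k m) Hcl.
have [g2 H2] := lowblk Hcl.
apply: Hind; exists (existT _ m g1), (existT _ k g2); split => /=; [lia|lia|].
exists (erefl (m + k)%N) => /=.
apply: (cohom_ext HE) => e t.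
have Hall : forall i, [/\ tperm (g' e) i = tperm (tsum (g1 e) (g2 e)) i,
    toff (g' e) i = toff (tsum (g1 e) (g2 e)) i &
    tslope (g' e) i = tslope (tsum (g1 e) (g2 e)) i].
  apply: ord_split_ind => [a|b].
    have [Hp Ho Hs] := H1 e a; have [Hp' Ho' Hs'] := tsum_l (g1 e) (g2 e) a.
    have Ew : widen_ord (leq_addr k m) a = lshift k a by apply: val_inj.
    rewrite Ew in Hp Ho Hs; rewrite Hp' Ho' Hs' Ho Hs; split => //.
    by apply: val_inj; rewrite /= -Hp.
  have [Hp Ho Hs] := H2 e b; have [Hp' Ho' Hs'] := tsum_r (g1 e) (g2 e) b.
  rewrite Hp' Ho' Hs' Ho Hs; split => //.
  by apply: val_inj; rewrite /= -Hp addnC.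
apply: functional_extensionality => i; apply: functional_extensionality => j.
by rewrite /tentry; have [-> -> ->] := Hall i.
Qed.

Definition preL a b (U : vert G -> {set 'I_(a + b)}) : vert G -> {set 'I_a} :=
  fun v => [set x | lshift b x \in U v].
Definition preR a b (U : vert G -> {set 'I_(a + b)}) : vert G -> {set 'I_b} :=
  fun v => [set y | rshift a y \in U v].
Definition comb a b (UA : vert G -> {set 'I_a}) (UB : vert G -> {set 'I_b})
  : vert G -> {set 'I_(a + b)} :=
  fun v => [set i | match split i with inl x => x \in UA v | inr y => y \in UB v end].

Lemma closed_pre (A B : bundle G) U : closed (tagged (dsum A B)) U ->
  closed (tagged A) (preL U) /\ closed (tagged B) (preR U).
Proof.
move=> Hc; split => e x; rewrite !inE Hc tagged_dsum.
  by have [-> _ _] := tsum_l (tagged A e) (tagged B e) x.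
by have [-> _ _] := tsum_r (tagged A e) (tagged B e) x.
Qed.

Lemma degS_pre (A B : bundle G) U : degS (tagged (dsum A B)) U =
  degS (tagged A) (preL U) + degS (tagged B) (preR U).
Proof.
rewrite /degS -big_split; apply: eq_bigr => e _; rewrite tagged_dsum.
rewrite big_split_ord; congr (_ + _); apply: eq_big => x; rewrite ?inE //.
  by move=> _; have [_ _ ->] := tsum_l (tagged A e) (tagged B e) x.
by move=> _; have [_ _ ->] := tsum_r (tagged A e) (tagged B e) x.
Qed.

Lemma card_pre a b (U : vert G -> {set 'I_(a + b)}) v :
  #|U v| = (#|preL U v| + #|preR U v|)%N.
Proof.
rewrite -!sum1_card big_split_ord; congr (_ + _)%N; apply: eq_bigl => x; by rewrite inE.
Qed.

Lemma preL_comb a b UA UB : preL (@comb a b UA UB) = UA.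
Proof. by apply: functional_extensionality => v; apply/setP => x; rewrite !inE split_l. Qed.
Lemma preR_comb a b UA UB : preR (@comb a b UA UB) = UB.
Proof. by apply: functional_extensionality => v; apply/setP => x; rewrite !inE split_r. Qed.

Lemma closed_comb (A B : bundle G) UA UB : closed (tagged A) UA -> closed (tagged B) UB ->
  closed (tagged (dsum A B)) (comb UA UB).
Proof.
move=> HA HB e; apply: ord_split_ind => [x|y]; rewrite !inE tagged_dsum.
  by have [-> _ _] := tsum_l (tagged A e) (tagged B e) x; rewrite !split_l HA.
by have [-> _ _] := tsum_r (tagged A e) (tagged B e) y; rewrite !split_r HB.
Qed.

Lemma degS0 n (g : cocycle G n) : degS g (fun _ => set0) = 0.
Proof. by rewrite /degS big1 // => e _; rewrite big_set0. Qed.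

Lemma closed0 n (g : cocycle G n) : closed g (fun _ => set0).
Proof. by move=> e i; rewrite !inE. Qed.

Lemma fam_block r (Es : 'I_r -> bundle G) (i : 'I_r) : exists U,
  [/\ closed (tagged (dsum_fam Es)) U, forall v, #|U v| = rk (Es i)
    & degS (tagged (dsum_fam Es)) U = deg (Es i)].
Proof.
elim: r Es i => [|r IH] Es i; first by case: i.
change (dsum_fam Es) with (dsum (Es ord0) (dsum_fam (fun j => Es (lift ord0 j)))).
case: (unliftP ord0 i) => [j ->|->].
  have [U' [Hc Hk Hd]] := IH (fun j => Es (lift ord0 j)) j.
  exists (comb (fun _ => set0) U'); split.
  - by apply: closed_comb => //; exact: closed0.
  - by move=> v; rewrite card_pre preL_comb preR_comb cards0 Hk.
  by rewrite degS_pre preL_comb preR_comb degS0 add0r Hd.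
exists (comb (full _) (fun _ => set0)); split.
- by apply: closed_comb; [exact: closed_full | exact: closed0].
- by move=> v; rewrite card_pre preL_comb preR_comb cards0 addn0 cardsT card_ord.
by rewrite degS_pre preL_comb preR_comb degS0 addr0 degS_full; case: (Es ord0).
Qed.

Lemma deg_dsum (A B : bundle G) : deg (dsum A B) = deg A + deg B.
Proof.
rewrite /deg -big_split; apply: eq_bigr => e _; rewrite tagged_dsum.
rewrite big_split_ord; congr (_ + _); apply: eq_bigr => x _.
  by have [_ _ ->] := tsum_l (tagged A e) (tagged B e) x.
by have [_ _ ->] := tsum_r (tagged A e) (tagged B e) x.
Qed.

Lemma fam_deg r (Es : 'I_r -> bundle G) : deg (dsum_fam Es) = \sum_i deg (Es i).
Proof.
elim: r Es => [|r IH] Es.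
  by rewrite big_ord0 /deg big1 // => e _; rewrite big_ord0.
by rewrite big_ord_recl -IH -deg_dsum.
Qed.

Lemma fam_rk r (Es : 'I_r -> bundle G) : rk (dsum_fam Es) = (\sum_i rk (Es i))%N.
Proof.
elim: r Es => [|r IH] Es; first by rewrite big_ord0.
by rewrite big_ord_recl -IH.
Qed.


Lemma deg_slope (X : bundle G) mu : (0 < rk X)%N -> slope X = mu ->
  ((deg X)%:~R = mu * (rk X)%:R :> rat).
Proof. by move=> Hp <-; rewrite /slope divfK // pnatr_eq0 -lt0n. Qed.

Lemma fam_closed_deg r (Es : 'I_r -> bundle G) (mu : rat) :
  (forall i, indecomposable (Es i)) -> (forall i, (0 < rk (Es i))%N) ->
  (forall i, slope (Es i) = mu) ->
  forall U, closed (tagged (dsum_fam Es)) U -> forall v,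
   ((degS (tagged (dsum_fam Es)) U)%:~R = mu * (#|U v|)%:R :> rat).
Proof.
elim: r Es => [|r IH] Es Hind Hpos Hsl U Hc v.
  have -> : #|U v| = 0%N.
    by apply/eqP; rewrite -leqn0; apply: leq_trans (max_card _) _; rewrite card_ord.
  rewrite mulr0 /degS big1 // => e _; apply: big1 => i; by case: i.
move: U Hc v.
change (dsum_fam Es) with (dsum (Es ord0) (dsum_fam (fun j => Es (lift ord0 j)))).
move=> U Hc v.
have [HcA HcB] := closed_pre Hc.
rewrite degS_pre card_pre intrD natrD mulrDr.
rewrite (IH _ (fun j => Hind _) (fun j => Hpos _) (fun j => Hsl _) _ HcB v).
congr (_ + _).
have Hk := closed_card HcA.
case: (posnP #|preL U v|) => [H0|Hp].
  have E0 : preL U = fun _ => set0.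
    by apply: functional_extensionality => w; apply: cards0_eq; rewrite (Hk w v) H0.
  by rewrite H0 E0 degS0 mulr0.
case: (ltnP #|preL U v| (rk (Es ord0))) => Hlt.
  exfalso; apply: (decomp HcA (fun w => Hk w v)) (Hind ord0).
  by rewrite Hp Hlt.
have EF : preL U = full _.
  apply: functional_extensionality => w; apply/eqP.
  by rewrite eqEcard subsetT cardsT card_ord (Hk w v).
rewrite EF degS_full cardsT card_ord.
have -> : deg (existT _ _ (tagged (Es ord0))) = deg (Es ord0) by [].
exact: deg_slope.
Qed.

Lemma iso_closed_to (E D : bundle G) U : iso E D -> closed (tagged D) U ->
  exists T, [/\ closed (tagged E) T, forall v, #|T v| = #|U v|
     & degS (tagged E) T = degS (tagged D) U].
Proof.
case: E => n gE; case: D U => n' gD U  [H]; simpl in H; subst n' => /cohomP [phi [Hh Hg]] Hc.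
exists (tr phi U); split.
- exact: ((closed_tr U Hg).1 Hc).
- by move=> v; rewrite card_tr.
by symmetry; exact: (deg_tr Hh Hg Hc).
Qed.

Lemma iso_closed_from (E D : bundle G) T : iso E D -> closed (tagged E) T ->
  exists U, [/\ closed (tagged D) U, forall v, #|U v| = #|T v|
     & degS (tagged D) U = degS (tagged E) T].
Proof.
case: E T => n gE T; case: D => n' gD  [H]; simpl in H; subst n' => /cohomP [phi [Hh Hg]] Hc.
pose U v := [set k | hperm (phi v) k \in T v].
have Etr : tr phi U = T.
  by apply: functional_extensionality => v; apply/setP => k; rewrite !inE permKV.
have HcU : closed gD U by apply/(closed_tr U Hg); rewrite Etr.
exists U; split => //.
- by move=> v; rewrite -(card_tr phi U) Etr.
by rewrite (deg_tr Hh Hg HcU) Etr.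
Qed.

Lemma iso_deg (E D : bundle G) : iso E D -> deg E = deg D.
Proof.
case: E => n gE; case: D => n' gD  [H]; simpl in H; subst n' => Hco.
exact: (cohom_deg Hco).
Qed.

Lemma iso_rk (E D : bundle G) : iso E D -> rk E = rk D.
Proof. by case. Qed.

End Proofs.

Lemma avg_contra (x y a b : rat) : 0 < a -> 0 < b ->
  x / a < (x + y) / (a + b) -> y / b < (x + y) / (a + b) -> False.
Proof.
move=> Ha Hb.
set mu := (x + y) / (a + b); set p := x / a; set q := y / b => Hp Hq.
have Ex : x = p * a by rewrite /p divfK // gt_eqF.
have Ey : y = q * b by rewrite /q divfK // gt_eqF.
have Em : mu * (a + b) = x + y by rewrite /mu divfK // gt_eqF // addr_gt0.
have H1 : p * a < mu * a by rewrite ltr_pM2r.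
have H2 : q * b < mu * b by rewrite ltr_pM2r.
lra.
Qed.

Lemma intr_sum (I : finType) (F : I -> int) :
  ((\sum_i F i)%:~R = \sum_i (F i)%:~R :> rat).
Proof. by apply: (big_morph (fun z : int => z%:~R : rat)) => [x y|]; rewrite ?intrD. Qed.

Theorem proposition5p2 (R : realType) (G : model R)
  (HG : simple_connected_model G) :
  (forall E : bundle G, (0 < rk E)%N -> (stable E <-> indecomposable E)) /\
  (forall (E : bundle G) (r : nat) (Es : 'I_r -> bundle G),
      (0 < rk E)%N ->
      (forall i, (0 < rk (Es i))%N) ->
      (forall i, indecomposable (Es i)) ->
      iso E (dsum_fam Es) ->
      (semistable E <-> forall i j : 'I_r, slope (Es i) = slope (Es j))).
Proof.
case: HG => Hlen Hloop _ Hconn Hv.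
have /card_gt0P [v0 _] := Hv.
have Hmax : forall (E : bundle G) (T : vert G -> {set 'I_(rk E)}) v, (#|T v| <= rk E)%N.
  by move=> E T v; apply: leq_trans (max_card _) _; rewrite card_ord.
split.
  move=> E HE; split.
    move=> Hst [A [B [Ha Hb Hiso]]].
    have HrE := iso_rk Hiso.
    have HdE := iso_deg Hlen Hloop Hiso; rewrite deg_dsum in HdE.
    have [TA [HcA HkA HdA]] := iso_closed_to Hlen Hloop Hiso
       (closed_comb (closed_full (tagged A)) (closed0 (tagged B))).
    have HkA' : forall v, #|TA v| = rk A.
      by move=> v; rewrite HkA card_pre preL_comb preR_comb cards0 cardsT card_ord addn0.
    have [FA [HsA HrA HdFA]] := closed_sub Hlen Hloop HcA HkA' ltac:(rewrite -(HkA' v0); exact: Hmax).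
    have [TB [HcB HkB HdB]] := iso_closed_to Hlen Hloop Hiso
       (closed_comb (closed0 (tagged A)) (closed_full (tagged B))).
    have HkB' : forall v, #|TB v| = rk B.
      by move=> v; rewrite HkB card_pre preL_comb preR_comb cards0 cardsT card_ord.
    have [FB [HsB HrB HdFB]] := closed_sub Hlen Hloop HcB HkB' ltac:(rewrite -(HkB' v0); exact: Hmax).
    have := Hst FA ltac:(rewrite HrA HrE /= Ha; lia) HsA.
    have := Hst FB ltac:(rewrite HrB HrE /= Hb; lia) HsB.
    rewrite /slope HrA HrB HdFA HdFB HdA HdB degS_pre degS_pre preL_comb preR_comb
      preL_comb preR_comb !degS0 addr0 add0r !degS_full HdE HrE /= natrD intrD.
    move=> H2 H1; apply: (avg_contra _ _ H1 H2); by rewrite ltr0n.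
  move=> Hind F /andP [Hp Hlt] Hs.
  have [T [Hc Hk Hd]] := sub_closed Hlen Hloop Hs.
  by exfalso; apply: (decomp Hlen Hloop Hc Hk) Hind; rewrite Hp Hlt.
move=> E r Es HE Hpos Hind Hiso; split.
  move=> Hss.
  have Hle : forall i, slope (Es i) <= slope E.
    move=> i; have [U [Hc Hk Hd]] := fam_block Es i.
    have [T [HcT HkT HdT]] := iso_closed_to Hlen Hloop Hiso Hc.
    have Hk' : forall v, #|T v| = rk (Es i) by move=> v; rewrite HkT Hk.
    have Hm : (rk (Es i) <= rk E)%N by rewrite -(Hk' v0); exact: Hmax.
    have [F [Hs Hr Hdf]] := closed_sub Hlen Hloop HcT Hk' Hm.
    have := Hss F ltac:(by rewrite Hr) Hs.
    by rewrite /slope Hr Hdf HdT Hd.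
  set mu := slope E.
  have HdE : ((deg E)%:~R = mu * (rk E)%:R :> rat) by exact: deg_slope.
  rewrite (iso_deg Hlen Hloop Hiso) fam_deg (iso_rk Hiso) fam_rk intr_sum natr_sum in HdE.
  have Hsum : \sum_i (mu - slope (Es i)) * (rk (Es i))%:R = 0.
    under eq_bigr => i _ do rewrite mulrBl -(deg_slope (Hpos i) (erefl _)).
    by rewrite sumrB -mulr_sumr HdE subrr.
  have Heq : forall i, slope (Es i) = mu.
    have Hnn : forall j : 'I_r, true -> 0 <= (mu - slope (Es j)) * (rk (Es j))%:R.
      by move=> j _; rewrite mulr_ge0 // ?ler0n // subr_ge0.
    move=> i; have := @psumr_eq0P _ _ _ _ Hnn Hsum i isT.
    move/eqP; rewrite mulf_eq0 pnatr_eq0 eqn0Ngt Hpos orbF subr_eq0 => /eqP <-.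
    by [].
  by move=> i j; rewrite !Heq.
move=> Heq F HF Hs.
have Hr : (0 < r)%N.
  case: (posnP r) => // Hr0; move: HE; rewrite (iso_rk Hiso) fam_rk big1 // => i _.
  by have := ltn_ord i; move: Hr0 (nat_of_ord i) => -> k.
set mu := slope (Es (Ordinal Hr)).
have Hsl : forall i, slope (Es i) = mu by move=> i; exact: Heq.
have [T [Hc Hk Hd]] := sub_closed Hlen Hloop Hs.
have [U [HcU HkU HdU]] := iso_closed_from Hlen Hloop Hiso Hc.
have H1 := fam_closed_deg Hlen Hloop Hconn Hind Hpos Hsl HcU v0.
have H2 := fam_closed_deg Hlen Hloop Hconn Hind Hpos Hsl (closed_full _) v0.
rewrite degS_full cardsT card_ord in H2.
have -> : slope F = mu.
  by rewrite /slope -Hd -HdU H1 HkU Hk mulfK // pnatr_eq0 -lt0n.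
have -> : slope E = mu.
  rewrite /slope (iso_deg Hlen Hloop Hiso) (iso_rk Hiso).
  have -> : deg (dsum_fam Es) = deg (existT _ _ (tagged (dsum_fam Es))) by [].
  have HD : (0 < rk (dsum_fam Es))%N by rewrite -(iso_rk Hiso).
  by rewrite H2 mulfK // pnatr_eq0 -lt0n; exact: HD.
by [].
Qed.
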